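(* In the Standing Setting, with $c,d$ defined for a flag $(p,B)$ as below and $\lambda^*=\lambda/(r,\lambda)$, we have $\lambda^*=c+d-2$.
   Context: Standing Setting: $\mathcal{D}=(\Omega,\mathcal{B})$ is a non-trivial $2$-$(v,k,\lambda)$ design (every two distinct points in exactly $\lambda$ blocks, blocks of size $k$, $2<k<v$) with $b$ blocks and replication number $r$, satisfying $\lambda\ge (r,\lambda)^2$. $G\le\mathrm{Aut}(\mathcal{D})$ is flag-transitive (transitive on pairs $(p,B)$ with $p\in B\in\mathcal{B}$). Moreover $\Omega=\Delta\times\Delta$ with $|\Delta|=\omega\ge 5$ odd, so $v=\omega^2$, and $T\times T\trianglelefteq G\le T_0\wr \mathbb{Z}_2$ acting in product action (the $\mathbb{Z}_2$ interchanging the two coordinates), where $T_0\le\mathrm{Sym}(\Delta)$ is $2$-transitive with nonabelian simple socle $T$; $G$ has rank $3$ on $\Omega$. For a flag $(p,B)$ with $p=(\alpha,\beta)$, $c$ is the number of points of $B$ with first coordinate $\alpha$ and $d$ the number of points of $B$ with second coordinate $\beta$. *)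

(* Defs.v *)
From HB Require Import structures.
From mathcomp Require Import all_boot all_fingroup all_solvable.
Set Implicit Arguments. Unset Strict Implicit. Unset Printing Implicit Defensive.
Import GroupScope.

Section ProductAction.
Variable D : finType.

Definition prod_fun (a b : {perm D}) (u : D * D) : D * D := (a u.1, b u.2).
Lemma prod_fun_inj a b : injective (prod_fun a b).
Proof.
move=> [x y] [x' y'] [/perm_inj -> /perm_inj ->]; done.
Qed.
Definition prod_perm (a b : {perm D}) : {perm (D * D)} := perm (@prod_fun_inj a b).

Definition swap_fun (u : D * D) : D * D := (u.2, u.1).
Lemma swap_fun_inj : injective swap_fun.
Proof. by move=> [x y] [x' y'] [-> ->]. Qed.
Definition swap_perm : {perm (D * D)} := perm swap_fun_inj.

Definition prodX (K : {set {perm D}}) : {set {perm (D * D)}} :=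
  [set prod_perm u.1 u.2 | u in setX K K].

Definition wreath2 (K : {set {perm D}}) : {set {perm (D * D)}} :=
  << prodX K :|: [set swap_perm] >>.

Definition socle (K : {group {perm D}}) : {set {perm D}} :=
  << \bigcup_(M : {group {perm D}} | minnormal M K) M >>.

Definition two_transitive (K : {set {perm D}}) : Prop :=
  forall x1 x2 y1 y2 : D, x1 != x2 -> y1 != y2 ->
    exists2 g, g \in K & g x1 = y1 /\ g x2 = y2.

End ProductAction.

Section Designs.
Variable P : finType.

Definition two_design (blocks : {set {set P}}) (k lambda : nat) : Prop :=
  (forall B, B \in blocks -> #|B| = k) /\
  (forall p q : P, p != q -> #|[set B in blocks | (p \in B) && (q \in B)]| = lambda).

Definition replication (blocks : {set {set P}}) (r : nat) : Prop :=
  forall p : P, #|[set B in blocks | p \in B]| = r.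

Definition automorphisms (blocks : {set {set P}}) (G : {set {perm P}}) : Prop :=
  forall g B, g \in G -> B \in blocks -> [set g x | x in B] \in blocks.

Definition flag_transitive (blocks : {set {set P}}) (G : {set {perm P}}) : Prop :=
  forall p B p' B', B \in blocks -> p \in B -> B' \in blocks -> p' \in B' ->
    exists2 g, g \in G & g p = p' /\ [set g x | x in B] = B'.

(* rank of a transitive permutation group = number of orbitals *)
Definition rank3 (G : {set {perm P}}) : Prop :=
  [transitive G, on [set: P] | 'P] /\
  #|[set [set (g u.1, g u.2) | g : {perm P} in G] | u : P * P]| = 3.

End Designs.

(* Main.v *)
Require Import Defs.
From HB Require Import structures.
From mathcomp Require Import all_boot all_fingroup all_solvable.
Import GroupScope.
From mathcomp Require all_algebra ring zify.

Module FisherM.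
Import all_algebra ring.
Set Implicit Arguments. Unset Strict Implicit. Unset Printing Implicit Defensive.
Import GRing.Theory Num.Theory.
Local Open Scope ring_scope.

Lemma fisher (P : finType) (blocks : {set {set P}}) (k lambda r : nat) :
  two_design blocks k lambda -> replication blocks r -> (lambda < r)%N ->
  (#|P| <= #|blocks|)%N.
Proof.
move=> [_ Hl] Hr ltlr.
set v := #|P|; set b := #|blocks|.
pose N : 'M[rat]_(v, b) :=
  \matrix_(i, j) ((enum_val i \in (enum_val j : {set P}))%:R).
pose a : rat := (r - lambda)%:R.
pose l : rat := lambda%:R.
pose J : 'M[rat]_v := const_mx 1.
have NN : N *m N^T = a%:M + l *: J.
  apply/matrixP => i j; rewrite !mxE.
  under eq_bigr => t _ do rewrite !mxE -natrM mulnb.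
  rewrite -natr_sum.
  rewrite -(big_enum_val (fun B : {set P} => (((enum_val i \in B) && (enum_val j \in B)) : nat))).
  rewrite -big_mkcondr /= sum1_card.
  have -> : (i == j) = (enum_val i == enum_val j).
    by apply/eqP/eqP => [->|/enum_val_inj].
  case: eqP => [<-|/eqP ne].
    rewrite mulr1n.
    have -> : #|[pred x in blocks | (enum_val i \in x) && (enum_val i \in x)]| = r.
      rewrite -(Hr (enum_val i)) -cardsE; apply: eq_card => B; rewrite !inE andbb //.
    by rewrite mulr1 /a /l -natrD subnK // ltnW.
  rewrite mulr0n add0r mulr1.
  rewrite /l -(Hl _ _ ne) -cardsE; congr (_%:R); apply: eq_card => B; rewrite !inE.
have JJ : J *m J = (v%:R : rat) *: J.
  apply/matrixP => i j; rewrite !mxE.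
  under eq_bigr => t _ do rewrite !mxE mulr1.
  by rewrite sumr_const card_ord mulr1.
have a0 : a != 0 by rewrite pnatr_eq0 subn_eq0 -ltnNge ltlr.
have al0 : a + l * v%:R != 0.
  by rewrite -natrM -natrD pnatr_eq0 addn_eq0 subn_eq0 leqNgt ltlr.
pose t := l / (a + l * v%:R).
pose X : 'M[rat]_v := a^-1 *: (1%:M - t *: J).
have NX : N *m (N^T *m X) = 1%:M.
  rewrite mulmxA NN /X.
  rewrite -scalemxAr mulmxDr mulmxN mulmxDl mulmxDl mul_scalar_mx mulmx1.
  rewrite mul_scalar_mx -scalemxAl -scalemxAr JJ !scalerA.
  apply/matrixP => i j; rewrite !mxE mulr1.
  have -> : a * t * 1 + l * t * v%:R * 1 = l.
    rewrite /t; field; exact: al0.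
  by rewrite addrK mulrA mulVf // mul1r.
have := mxrankM_maxl N (N^T *m X); rewrite NX mxrank1 => H.
exact: leq_trans H (rank_leq_col _).
Qed.

End FisherM.

Module ArithM.
Import zify.
Local Open Scope nat_scope.
Lemma arith r l w k x :
  0 < l -> 2 < k -> 2 <= w -> k <= r -> (gcdn r l) ^ 2 <= l ->
  r * x = l * (w + w - 2) -> r * (k - 1) = l * (w * w - 1) -> l %/ gcdn r l = x.
Proof.
move=> l0 k2 w2 kr gl E1 E2.
set g := gcdn r l.
have g0 : 0 < g by rewrite gcdn_gt0 l0 orbT.
have Er : r = r %/ g * g by rewrite divnK // dvdn_gcdl.
have El : l = l %/ g * g by rewrite divnK // dvdn_gcdr.
set r1 := r %/ g in Er; set l1 := l %/ g in El *.
have cop : coprime r1 l1.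
  rewrite /coprime; apply/eqP.
  have : gcdn r l = gcdn r1 l1 * g by rewrite {1}Er {1}El muln_gcdl.
  rewrite -/g => H.
  have : 1 * g = gcdn r1 l1 * g by rewrite mul1n.
  by move/eqP; rewrite eqn_pmul2r // => /eqP.
have l10 : 0 < l1 by rewrite lt0n; apply/eqP => H; move: El l0; rewrite H mul0n => ->.
have E1' : r1 * x = l1 * (w + w - 2).
  apply/eqP; rewrite -(eqn_pmul2r g0); apply/eqP.
  by rewrite mulnAC -Er E1 mulnAC -El.
have : l1 %| x.
  rewrite coprime_sym in cop.
  by rewrite -(Gauss_dvdr _ cop) E1' dvdn_mulr.
case/dvdnP => m Hx.
rewrite Hx in E1'.
have E3 : r1 * m = w + w - 2.
  apply/eqP; rewrite -(eqn_pmul2l l10); apply/eqP.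
  by rewrite -E1' mulnCA [l1 * m]mulnC.
rewrite Hx.
have : m = 1.
  clear E1'; case: m Hx E3 => [|[|m]] Hx E3 //.
    by rewrite muln0 in E3; lia.
  exfalso.
  have r1w : r1 * 2 <= w + w - 2 by rewrite -E3 leq_mul2l ltnS ltnS leq0n orbT.
  have r1w' : r1 <= w - 1 by lia.
  have rw : r <= (w - 1) * g by rewrite Er leq_mul2r r1w' orbT.
  have h1 : r * (k - 1) < r * r.
    by rewrite ltn_mul2l; apply/andP; split; lia.
  have h2 : r * r <= ((w - 1) * g) * ((w - 1) * g) by apply: leq_mul.
  have h3 : g * g <= l by move: gl; rewrite expnS expn1.
  have h4 : ((w - 1) * g) * ((w - 1) * g) = ((w - 1) * (w - 1)) * (g * g).
    by rewrite mulnACA.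
  have h5 : ((w - 1) * (w - 1)) * (g * g) <= (w * w - 1) * l.
    apply: leq_mul => //.
    rewrite mulnBl mul1n mulnBr muln1; lia.
  move: h1; rewrite E2 mulnC => h1.
  have := leq_trans h1 (leq_trans h2 (eq_leq h4)).
  move=> h6; have := leq_trans h6 h5; by rewrite ltnn.
by move=> ->; rewrite mul1n.
Qed.

End ArithM.

Definition rel1 {D : finType} (u w : D * D) := (u.1 == w.1) || (u.2 == w.2).

Lemma wreath_rel (D : finType) (T0 : {group {perm D}}) g :
  g \in wreath2 T0 -> forall u w, rel1 (g u) (g w) = rel1 u w.
Proof.
pose S := [set g : {perm (D * D)} | [forall u, forall w, rel1 (g u) (g w) == rel1 u w]].
have gS : group_set S.
  apply/group_setP; split.
    by rewrite inE; apply/forallP => u; apply/forallP => w; rewrite !perm1.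
  move=> x y; rewrite !inE => /forallP Hx /forallP Hy.
  apply/forallP => u; apply/forallP => w; rewrite !permM.
  by rewrite (eqP (forallP (Hy _) _)) (eqP (forallP (Hx _) _)).
have sub : wreath2 T0 \subset Group gS.
  rewrite /wreath2 gen_subG; apply/subsetP => x; case/setUP.
    case/imsetP => [[a b] _ ->]; rewrite inE.
    apply/forallP => u; apply/forallP => w; rewrite /prod_perm !permE /prod_fun /rel1 /=.
    by rewrite !(inj_eq perm_inj).
  rewrite inE => /eqP ->; rewrite inE.
  apply/forallP => u; apply/forallP => w; rewrite /swap_perm !permE /swap_fun /rel1 /=.
  by rewrite orbC.
move=> Hg u w; have := subsetP sub g Hg; rewrite inE => /forallP H.
exact: (eqP (forallP (H u) w)).
Qed.

Lemma sum_bool (T : finType) (P C : pred T) :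
  (\sum_(x | P x) (C x : nat))%N = #|[set x | P x && C x]|.
Proof.
rewrite -sum1dep_card big_mkcondr /=; apply: eq_bigr => x _; by case: (C x).
Qed.

Lemma dcount (P : finType) (blocks : {set {set P}}) (lambda r m : nat) (S : {set P}) p :
  (forall q, p != q -> #|[set B in blocks | (p \in B) && (q \in B)]| = lambda) ->
  replication blocks r -> p \notin S ->
  (forall B, B \in blocks -> p \in B -> #|B :&: S| = m) -> (r * m = lambda * #|S|)%N.
Proof.
move=> Hl Hr pS Hm.
have E1 : (\sum_(B | (B \in blocks) && (p \in B)) \sum_(q | q \in S) (q \in B : nat))%N = (r * m)%N.
  transitivity (\sum_(B | (B \in blocks) && (p \in B)) 1 * m)%N.
    apply: eq_bigr => B /andP[HB pB]; rewrite mul1n -(Hm B HB pB) sum_bool.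
    by apply: eq_card => q; rewrite !inE andbC.
  by rewrite -big_distrl /= sum1dep_card -(Hr p).
rewrite -E1 exchange_big /=.
transitivity (\sum_(q | q \in S) lambda)%N.
  apply: eq_bigr => q qS; rewrite sum_bool -(Hl q); last by apply: contraNneq pS => ->.
  by apply: eq_card => B; rewrite !inE andbA.
by rewrite sum_nat_const mulnC.
Qed.

Lemma incid (P : finType) (blocks : {set {set P}}) (k lambda r : nat) :
  two_design blocks k lambda -> replication blocks r ->
  (#|blocks| * k = #|P| * r)%N.
Proof.
move=> [Hk _] Hr.
transitivity (\sum_(B | B \in blocks) \sum_(q | true) (q \in B : nat))%N.
  rewrite -sum1_card big_distrl /=; apply: eq_bigr => B HB.
  rewrite mul1n sum_bool -(Hk B HB); apply: eq_card => q; by rewrite !inE.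
rewrite exchange_big /= -sum1_card big_distrl /=; apply: eq_bigr => q _.
rewrite mul1n sum_bool -(Hr q); apply: eq_card => B; by rewrite !inE.
Qed.

Import zify.

Theorem lemma2p3 (Delta : finType) (blocks : {set {set (Delta * Delta)}})
    (k lambda r : nat)
    (G : {group {perm (Delta * Delta)}}) (T0 T : {group {perm Delta}}) :
  (* Delta has odd size omega >= 5, so v = omega^2 *)
  5 <= #|Delta| -> odd #|Delta| ->
  (* non-trivial 2-(v,k,lambda) design with replication number r *)
  two_design blocks k lambda -> 0 < lambda -> 2 < k -> k < #|Delta| ^ 2 ->
  replication blocks r ->
  (gcdn r lambda) ^ 2 <= lambda ->
  (* T0 2-transitive on Delta with nonabelian simple socle T *)
  two_transitive T0 -> T :=: socle T0 -> simple T -> ~~ abelian T ->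
  (* T x T normal in G <= T0 wr Z_2 (product action) *)
  prodX T <| G -> G \subset wreath2 T0 ->
  (* G flag-transitive automorphism group of rank 3 *)
  automorphisms blocks G -> flag_transitive blocks G -> rank3 G ->
  forall (p : Delta * Delta) (B : {set (Delta * Delta)}),
    B \in blocks -> p \in B ->
    let c := #|[set q in B | q.1 == p.1]| in
    let d := #|[set q in B | q.2 == p.2]| in
    lambda %/ gcdn r lambda = c + d - 2.
Proof.
move=> w5 _ HD l0 k2 kv Hr gl _ _ _ _ _ sGW _ Hft _ p B HB pB c d.
have [Hk Hl] := HD.
set w := #|Delta|.
have HP : #|{: Delta * Delta}| = (w * w)%N by rewrite card_prod.
pose Ga := [set q : Delta * Delta | (q != p) && rel1 q p].
have HGa : forall B', B' \in blocks -> p \in B' -> #|B' :&: Ga| = #|B :&: Ga|.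
  move=> B' HB' pB'; have [g Gg [gp gB]] := Hft p B p B' HB pB HB' pB'.
  have Rg := @wreath_rel _ _ g (subsetP sGW g Gg).
  have gGa : forall x, (g x \in Ga) = (x \in Ga).
    move=> x; rewrite !inE; congr (_ && _); first by rewrite -{1}gp (inj_eq perm_inj).
    by rewrite -{1}gp Rg.
  have -> : B' :&: Ga = [set g x | x in B :&: Ga].
    rewrite -gB; apply/setP => y; rewrite inE; apply/andP/imsetP.
      case=> /imsetP[x xB ->]; rewrite gGa => xG; exists x => //; by rewrite inE xB.
    case=> x; rewrite inE => /andP[xB xG] ->; split; first by apply: imset_f.
    by rewrite gGa.
  by rewrite card_imset //; apply: perm_inj.
pose C := [set q in B | q.1 == p.1].
pose Dd := [set q in B | q.2 == p.2].
have CD : C :&: Dd = [set p].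
  apply/setP => q; rewrite !inE; apply/idP/idP.
    case/andP=> /andP[_ /eqP h1] /andP[_ /eqP h2]; apply/eqP; by rewrite [q]surjective_pairing h1 h2 -surjective_pairing.
  by move/eqP->; rewrite pB !eqxx.
have BGa : B :&: Ga = (C :|: Dd) :\ p.
  apply/setP => q; rewrite !inE /rel1; case: (q == p) => //=; by case: (q \in B).
have cB : (#|B :&: Ga| + 2 = c + d)%N.
  have h1 := cardsUI C Dd; rewrite CD cards1 in h1.
  have h2 := cardsD1 p (C :|: Dd).
  have pC : p \in C :|: Dd by rewrite !inE pB eqxx.
  rewrite pC add1n in h2; rewrite BGa; rewrite /c /d -/C -/Dd; by rewrite -h1 h2 addSnnS.
pose Row := [set q : Delta * Delta | q.1 == p.1].
pose Col := [set q : Delta * Delta | q.2 == p.2].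
have cRow : #|Row| = w.
  have -> : Row = setX [set p.1] [set: Delta] by apply/setP => q; rewrite !inE andbT.
  by rewrite cardsX cards1 cardsT mul1n.
have cCol : #|Col| = w.
  have -> : Col = setX [set: Delta] [set p.2] by apply/setP => q; rewrite !inE.
  by rewrite cardsX cards1 cardsT muln1.
have cGa : (#|Ga| + 2 = w + w)%N.
  have -> : Ga = (Row :|: Col) :\ p.
    by apply/setP => q; rewrite !inE /rel1.
  have RC : Row :&: Col = [set p].
    apply/setP => q; rewrite !inE; apply/idP/idP.
      case/andP=> /eqP h1 /eqP h2; apply/eqP; by rewrite [q]surjective_pairing h1 h2 -surjective_pairing.
    by move/eqP->; rewrite !eqxx.
  have h1 := cardsUI Row Col; rewrite RC cards1 cRow cCol in h1.
  have h2 := cardsD1 p (Row :|: Col).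
  have pC : p \in Row :|: Col by rewrite !inE eqxx.
  rewrite pC add1n in h2.
  by rewrite -h1 h2 addSnnS.
have E1 : (r * #|B :&: Ga| = lambda * #|Ga|)%N.
  by apply: (@dcount _ blocks lambda r _ Ga p (Hl p) Hr _ HGa); rewrite !inE eqxx.
have E2 : (r * (k - 1) = lambda * (w * w - 1))%N.
  have H := @dcount _ blocks lambda r (k - 1) [set~ p] p (Hl p) Hr.
  rewrite cardsC1 HP -subn1 in H; apply: H; first by rewrite !inE eqxx.
  move=> B' HB' pB'; have := cardsD1 p B'; rewrite pB' (Hk B' HB') add1n => ->.
  rewrite subn1 /=; apply: eq_card => q; by rewrite !inE andbC.
have fis := FisherM.fisher HD Hr.
have inc := @incid _ _ _ _ _ HD Hr.
rewrite HP in inc.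
have w2 : 2 <= w by apply: leq_trans w5.
have kv' : k < w * w by move: kv; rewrite -mulnn.
have lr : lambda < r.
  rewrite ltnNge; apply/negP => rl.
  have : (r * (k - 1) <= lambda * (k - 1))%N by rewrite leq_mul2r rl orbT.
  rewrite E2 leqNgt ltn_mul2l l0 /=; apply/negP/negPn.
  lia.
have kr : k <= r.
  have ww : 0 < w * w by rewrite muln_gt0 andbb; apply: leq_trans w5.
  rewrite -(leq_pmul2l ww) -inc leq_mul2r.
  by rewrite -HP (fis lr) orbT.
have Hx : c + d - 2 = #|B :&: Ga| by rewrite -cB addnK.
have HGa' : #|Ga| = (w + w - 2)%N by rewrite -cGa addnK.
rewrite Hx; apply: (@ArithM.arith r lambda w k _ l0 k2 w2 kr gl); first by rewrite E1 HGa'.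
by [].
Qed.
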